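(* Let $k,\delta,p$ be positive integers with $p<\delta$, and let $\epsilon>0$ be a real number such that $$\gamma_e:=(1-\epsilon)\frac{\binom{\delta}{p}}{\binom{\delta-p+e}{e}}>1\qquad\text{for all } e\in\{0,1,\dots,p-1\}.$$ Define $\gamma_p:=1$, $A:=\lceil\binom{\delta}{p}/\epsilon\rceil$, and for integers $k,t$ $$\mathcal S_{(k,t,p)}:=\Big\{(k_0,\dots,k_p)\in\mathbb N_0^{p+1}:\ \sum_{i=0}^p k_i=k,\ \sum_{i=0}^p i\,k_i\le t+p\Big\}.$$ Then for all non-negative integers $t$ and $k$ with $\delta k\ge t$, $$M(A+\delta k,t)\ \ge\ \Big\lfloor A\min_{(k_0,\dots,k_p)\in\mathcal S_{(k,t,p)}}\prod_{e=0}^p\gamma_e^{k_e}\Big\rfloor,$$ and in particular $$M(A+\delta k,t)\ \ge\ A\,\frac{(1-\epsilon)^k\binom{\delta}{p}^k}{\binom{\delta k-pk+t+p}{t+p}}-1.$$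
   Context: Binary Z-channel with noiseless feedback: an input $0$ is always received as $0$; an input $1$ is received as $1$ or (an error) as $0$. A feedback encoding strategy of blocklength $n$ for a finite message set $\mathcal M$ consists of functions $c_i:\mathcal M\times\{0,1\}^{i-1}\to\{0,1\}$, $i=1,\dots,n$; when sending $m$, the $i$-th transmitted symbol is $c_i(m,y^{i-1})$, with $y^{i-1}$ the previously received symbols. Let $c(m,y^{n-1})=(c_1(m),\dots,c_n(m,y^{n-1}))$ and $\mathcal Y^n_t(m)=\{y^n\in\{0,1\}^n:y_i\le c_i(m,y^{i-1})\ \forall i,\ d_H(y^n,c(m,y^{n-1}))\le t\}$ ($d_H$ Hamming distance). The strategy is successful if the sets $\mathcal Y^n_t(m)$, $m\in\mathcal M$, are pairwise disjoint. $M(n,t)$ denotes the maximum $|\mathcal M|$ admitting a successful strategy of blocklength $n$ with at most $t$ errors. $\mathbb N_0$ denotes the non-negative integers. *)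

(* Defs.v *)
From HB Require Import structures.
From mathcomp Require Import all_boot all_order all_algebra.
From mathcomp Require Import boolp reals.
Unset Printing Implicit Defensive.
Import Order.TTheory GRing.Theory Num.Theory.

(* A feedback strategy for message set Msg: the i-th (0-based) transmitted
   symbol for message m is  c i m y  where y is the sequence of the i
   previously received symbols. *)
Definition strategy (Msg : finType) := nat -> Msg -> seq bool -> bool.

Definition codeword (Msg : finType) (n : nat) (c : strategy Msg) (m : Msg)
  (y : seq bool) : seq bool :=
  [seq c i m (take i y) | i <- iota 0 n].
Arguments codeword {Msg} n c m y.

Definition hamming (n : nat) (u v : seq bool) : nat :=
  \sum_(i < n) (nth false u i != nth false v i).

Definition outputs (Msg : finType) (n t : nat) (c : strategy Msg) (m : Msg) :
  pred (n.-tuple bool) :=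
  fun y => [forall i : 'I_n, (tnth y i <= c i m (take i y))%N]
           && (hamming n y (codeword n c m y) <= t)%N.
Arguments outputs {Msg} n t c m.

Definition successful (Msg : finType) (n t : nat) (c : strategy Msg) : Prop :=
  forall m1 m2 : Msg, m1 != m2 ->
    [disjoint outputs n t c m1 & outputs n t c m2].
Arguments successful {Msg} n t c.

Definition admits (n t m : nat) : Prop :=
  exists c : strategy 'I_m, successful n t c.

(* M(n,t): the maximum m admitting a successful strategy.  Any such m is
   at most 2^n (the sets Y_t(m) are nonempty and disjoint), so the max
   over m <= 2^n is the true maximum. *)
Definition Mzf (n t : nat) : nat :=
  \max_(m < (2 ^ n).+1 | `[< admits n t m >]) m.

Local Open Scope ring_scope.

Definition gamma (R : realType) (delta p : nat) (eps : R) (e : nat) : R :=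
  if (e < p)%N then (1 - eps) * ('C(delta, p))%:R / ('C(delta - p + e, e))%:R
  else 1.
Arguments gamma {R} delta p eps e.

Definition Sktp (k t p : nat) (kk : {ffun 'I_p.+1 -> 'I_k.+1}) : bool :=
  ((\sum_(i < p.+1) (kk i : nat)) == k)%N
            && (\sum_(i < p.+1) (i * kk i) <= t + p)%N.

Definition gprod (R : realType) (delta p : nat) (eps : R) (k : nat)
  (kk : {ffun 'I_p.+1 -> 'I_k.+1}) : R :=
  \prod_(e < p.+1) gamma delta p eps e ^+ (kk e : nat).
Arguments gprod {R} delta p eps k kk.

(* minimum over S_(k,t,p); the neutral element gamma_0^k is the value at
   (k,0,...,0), which belongs to S_(k,t,p), so this is the true minimum *)
Definition minS (R : realType) (delta p : nat) (eps : R) (k t : nat) : R :=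
  \big[Num.min/gamma delta p eps 0 ^+ k]_(kk | Sktp k t p kk)
     gprod delta p eps k kk.
Arguments minS {R} delta p eps k t.

(* Main.v *)
Require Import Defs.
From HB Require Import structures.
From mathcomp Require Import all_boot all_order all_algebra.
From mathcomp Require Import boolp reals.
From mathcomp Require Import zify ring lra.
Import Order.TTheory GRing.Theory Num.Theory.

Lemma outputsE (Msg : finType) n t (c : strategy Msg) m (y : n.-tuple bool) :
  outputs n t c m y = [forall i : 'I_n, nth false y i <= c i m (take i y)]
     && (\sum_(i < n) (nth false y i != c i m (take i y)) <= t).
Proof.
rewrite /outputs /hamming; congr (_ && _).
  by apply: eq_forallb => i; rewrite (tnth_nth false).
congr (_ <= _); apply: eq_bigr => i _.
by rewrite /codeword (nth_map 0) ?size_iota // nth_iota.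
Qed.

Definition succ_on (Msg : finType) n t (c : strategy Msg) (P : pred Msg) :=
  forall m1 m2, P m1 -> P m2 -> m1 != m2 -> forall y : n.-tuple bool,
    outputs n t c m1 y -> outputs n t c m2 y -> False.
Arguments succ_on {Msg} n t c P.

Lemma succ_admits N n t (c : strategy 'I_N) : succ_on n t c predT -> admits n t N.
Proof.
move=> H; exists c => m1 m2 ne; apply/pred0P => y /=.
apply/negbTE/negP => /andP[h1 h2]; exact: (H m1 m2 isT isT ne y h1 h2).
Qed.

Lemma admits_succ N n t : admits n t N -> forall (Msg : finType) (P : pred Msg),
  #|P| <= N -> exists c : strategy Msg, succ_on n t c P.
Proof.
case=> c0 H Msg P hP; case: N c0 H hP => [|N] c0 H hP.
  exists (fun _ _ _ => false) => m1 m2 P1; move: hP.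
  rewrite leqn0 => /eqP /card0_eq /(_ m1); rewrite !inE /= => h.
  have : m1 \in P by exact: P1.
  by rewrite h.
pose f (x : Msg) : 'I_N.+1 := inord (index x (enum P)).
exists (fun i m y => c0 i (f m) y) => m1 m2 P1 P2 ne y o1 o2.
have fne : f m1 != f m2.
  apply: contra ne => /eqP/(congr1 val); rewrite /f /= !inordK.
  - move=> e; apply/eqP.
    have h1 : m1 \in enum P by rewrite mem_enum.
    have h2 : m2 \in enum P by rewrite mem_enum.
    by rewrite -(nth_index m1 h1) e (nth_index m1 h2).
  - by apply: leq_trans hP; rewrite cardE index_mem mem_enum.
  - by apply: leq_trans hP; rewrite cardE index_mem mem_enum.
have := H _ _ fne; move/pred0P/(_ y) => /=.
have e1 : y \in outputs n t c0 (f m1) := o1.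
have e2 : y \in outputs n t c0 (f m2) := o2.
by rewrite e1 e2.
Qed.

Fixpoint errfree {Msg : finType} (c : strategy Msg) (m : Msg) (i : nat) : seq bool :=
  if i is j.+1 then rcons (errfree c m j) (c j m (errfree c m j)) else [::].

Lemma size_errfree (Msg : finType) (c : strategy Msg) m i : size (errfree c m i) = i.
Proof. by elim: i => //= i IH; rewrite size_rcons IH. Qed.

Lemma take_errfree (Msg : finType) (c : strategy Msg) m i j :
  i <= j -> take i (errfree c m j) = errfree c m i.
Proof.
elim: j => [|j IH]; first by rewrite leqn0 => /eqP ->.
rewrite leq_eqVlt => /orP[/eqP ->|]; first by rewrite take_oversize // size_errfree.
rewrite ltnS => hij /=; rewrite -cats1 takel_cat ?size_errfree // IH //.
Qed.

Lemma nth_errfree (Msg : finType) (c : strategy Msg) m i j :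
  i < j -> nth false (errfree c m j) i = c i m (errfree c m i).
Proof.
elim: j => [//|j IH]; rewrite ltnS leq_eqVlt => /orP[/eqP ->|hij] /=.
  by rewrite nth_rcons size_errfree ltnn eqxx.
by rewrite nth_rcons size_errfree hij IH.
Qed.

Lemma admits_le N n t : admits n t N -> N <= 2 ^ n.
Proof.
case=> c H.
have sz m : size (errfree c m n) == n by rewrite size_errfree.
pose ef (m : 'I_N) : n.-tuple bool := Tuple (sz m).
have efo m : outputs n t c m (ef m).
  rewrite outputsE; apply/andP; split.
    apply/forallP => i /=; rewrite nth_errfree // take_errfree //; exact: ltnW.
  rewrite big1 // => i _ /=; rewrite nth_errfree // take_errfree ?eqxx //; exact: ltnW.
have inj : injective ef.
  move=> m1 m2 e; apply/eqP; apply/negPn/negP => ne.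
  have := H _ _ ne; move/pred0P/(_ (ef m1)) => /=.
  have e1 : ef m1 \in outputs n t c m1 := efo m1.
  have e2 : ef m1 \in outputs n t c m2 by rewrite e; exact: efo m2.
  by rewrite e1 e2.
have := leq_card ef inj; by rewrite card_ord card_tuple card_bool.
Qed.

Lemma Mzf_ge n t N : admits n t N -> N <= Mzf n t.
Proof.
move=> h; have hl : N < (2 ^ n).+1 by rewrite ltnS; exact: admits_le h.
rewrite /Mzf.
exact: (@leq_bigmax_cond _ (fun m : 'I_(2 ^ n).+1 => `[< admits n t m >])
          (fun m => nat_of_ord m) (Ordinal hl) (asboolT h)).
Qed.

Definition cL (N : nat) : strategy 'I_N :=
  fun i m y => (\sum_(j < size y) nth false y j < m)%N.
Arguments cL {N}.

Lemma cL_key n t N (m : 'I_N) (y : n.-tuple bool) :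
  m <= n - t -> outputs n t (@cL N) m y -> \sum_(j < n) nth false y j = m.
Proof.
rewrite outputsE => hm /andP[/forallP V E].
set s := fun i => \sum_(j < i) nth false y j.
have cE i : i <= n -> cL i m (take i y) = (s i < m).
  move=> hi; rewrite /cL size_takel ?size_tuple //.
  by congr (_ < _); apply: eq_bigr => j _; rewrite nth_take.
have V' i : i < n -> nth false y i <= (s i < m).
  by move=> hi; have := V (Ordinal hi); rewrite /= cE // ltnW.
have sS i : s i.+1 = s i + nth false y i by rewrite /s big_ord_recr.
have le i : i <= n -> s i <= m.
  elim: i => [|i IH] hi; first by rewrite /s big_ord0.
  rewrite sS; have := V' i hi; case: (nth false y i) => /= h.
    by rewrite addn1; case: (s i < m) h.
  by rewrite addn0 IH // ltnW.
have err i : i <= n -> s i < m ->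
    \sum_(j < i) (nth false y j != (s j < m)) + s i = i.
  elim: i => [|i IH] hi h; first by rewrite /s !big_ord0.
  have hi' : s i < m by apply: leq_ltn_trans h; rewrite sS leq_addr.
  rewrite big_ord_recr /= sS hi'.
  have := IH (ltnW hi) hi'; case: (nth false y i) => /=; lia.
apply/eqP; rewrite eqn_leq le //=; rewrite leqNgt; apply/negP => h.
have := err n (leqnn n) h.
have -> : \sum_(j < n) (nth false y j != (s j < m)) =
          \sum_(j < n) (nth false y j != cL j m (take j y)).
  by apply: eq_bigr => j _; rewrite cE // ltnW.
  move=> H; have H2 : n <= t + s n by rewrite -{1}H; exact: leq_add E (leqnn _).
  have h' : s n < m := h; move: hm h' H2; generalize (s n); clear; lia.
Qed.

Lemma admits_count n t N : N <= (n - t).+1 -> admits n t N.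
Proof.
move=> hN; apply: (@succ_admits _ _ _ (@cL N)) => m1 m2 _ _ ne y o1 o2.
have h1 : (m1 : nat) <= n - t by rewrite -ltnS; apply: leq_trans hN.
have h2 : (m2 : nat) <= n - t by rewrite -ltnS; apply: leq_trans hN.
have := @cL_key n t N m1 y h1 o1; rewrite (@cL_key n t N m2 y h2 o2) => /val_inj e.
by move: ne; rewrite e eqxx.
Qed.

Definition comb {Msg : finType} d (w : Msg -> seq bool) (c2 : seq bool -> strategy Msg)
  : strategy Msg :=
  fun i m y => if i < d then nth false (w m) i else c2 (take d y) (i - d) m (drop d y).

Definition v1 {Msg : finType} d (w : Msg -> seq bool) m (y1 : seq bool) :=
  [forall i : 'I_d, nth false y1 i <= nth false (w m) i].
Definition h1 {Msg : finType} d (w : Msg -> seq bool) m (y1 : seq bool) :=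
  \sum_(i < d) (nth false y1 i != nth false (w m) i).

Definition dropt d n2 (y : (d + n2).-tuple bool) : n2.-tuple bool :=
  @Tuple n2 bool (drop d y) (introT eqP (etrans (size_drop d y)
     (etrans (congr1 (fun x => x - d) (size_tuple y)) (addKn d n2)))).
Arguments dropt {d n2}.

Lemma combE_l {Msg : finType} d w c2 (m : Msg) i (y : seq bool) :
  i < d -> comb d w c2 i m (take i y) = nth false (w m) i.
Proof. by rewrite /comb => ->. Qed.

Lemma combE_r {Msg : finType} d w c2 (m : Msg) j (y : seq bool) :
  comb d w c2 (d + j) m (take (d + j) y) = c2 (take d y) j m (take j (drop d y)).
Proof.
rewrite /comb ltnNge leq_addr /= addKn take_takel ?leq_addr //.
by rewrite take_drop addnC.
Qed.

Lemma comb_out {Msg : finType} d n2 t w c2 (m : Msg) (y : (d + n2).-tuple bool) :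
  outputs (d + n2) t (comb d w c2) m y ->
  [/\ v1 d w m (take d y), h1 d w m (take d y) <= t &
      outputs n2 (t - h1 d w m (take d y)) (c2 (take d y)) m (dropt y)].
Proof.
rewrite outputsE => /andP[/forallP V E].
move: E; rewrite big_split_ord /= => E.
have eh : h1 d w m (take d y) =
    \sum_(i < d) (nth false y (lshift n2 i) != comb d w c2 (lshift n2 i) m (take (lshift n2 i) y)).
  by apply: eq_bigr => i _ /=; rewrite combE_l // nth_take.
have eh2 : \sum_(j < n2) (nth false (dropt y) j != c2 (take d y) j m (take j (dropt y))) =
    \sum_(j < n2) (nth false y (rshift d j) != comb d w c2 (rshift d j) m (take (rshift d j) y)).
  by apply: eq_bigr => j _ /=; rewrite combE_r nth_drop.
split.
- apply/forallP => i; have := V (lshift n2 i); by rewrite /= combE_l // nth_take.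
- by rewrite eh; apply: leq_trans E; apply: leq_addr.
rewrite outputsE; apply/andP; split.
  apply/forallP => j; have := V (rshift d j); by rewrite /= combE_r nth_drop.
by rewrite eh2 eh leq_subRL ?(leq_trans (leq_addr _ _) E).
Qed.

Lemma comb_succ (Msg : finType) d n2 t (w : Msg -> seq bool)
    (c2 : seq bool -> strategy Msg) (P : pred Msg) :
  (forall y1 m1 m2, P m1 -> P m2 -> m1 != m2 -> v1 d w m1 y1 -> v1 d w m2 y1 ->
     h1 d w m1 y1 <= t -> h1 d w m2 y1 <= t -> forall y2 : n2.-tuple bool,
     outputs n2 (t - h1 d w m1 y1) (c2 y1) m1 y2 ->
     outputs n2 (t - h1 d w m2 y1) (c2 y1) m2 y2 -> False) ->
  succ_on (d + n2) t (comb d w c2) P.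
Proof.
move=> H m1 m2 P1 P2 ne y o1 o2.
case: (@comb_out Msg d n2 t w c2 m1 y o1) => a1 b1 c1; case: (@comb_out Msg d n2 t w c2 m2 y o2) => a2 b2 c2'.
exact: (H _ _ _ P1 P2 ne a1 a2 b1 b2 _ c1 c2').
Qed.

Lemma sum_card (T : finType) (A : {set T}) : \sum_(i : T) ((i \in A) : nat) = #|A|.
Proof.
rewrite -sum1_card [RHS]big_mkcond /=; apply: eq_bigr => i _; by case: (i \in A).
Qed.

Definition bits {dl : nat} (s : {set 'I_dl}) : seq bool := [seq j \in s | j <- enum 'I_dl].

Lemma nth_bits dl (s : {set 'I_dl}) (j : 'I_dl) : nth false (bits s) j = (j \in s).
Proof. by rewrite /bits (nth_map j) ?size_enum_ord // nth_ord_enum. Qed.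

Definition Yset dl (y1 : seq bool) : {set 'I_dl} := [set j : 'I_dl | nth false y1 j].

Lemma v1_bits (Msg : finType) dl (ws : Msg -> {set 'I_dl}) m y1 :
  v1 dl (fun m => bits (ws m)) m y1 = (Yset dl y1 \subset ws m).
Proof.
apply/forallP/subsetP => /= H j.
  by rewrite inE => hj; have := H j; rewrite nth_bits hj; case: (j \in ws m).
by rewrite nth_bits; case: (boolP (nth false y1 j)) => // hj; have := H j; rewrite inE hj => /(_ isT) ->.
Qed.

Lemma h1_bits (Msg : finType) dl (ws : Msg -> {set 'I_dl}) m y1 :
  Yset dl y1 \subset ws m ->
  h1 dl (fun m => bits (ws m)) m y1 = #|ws m| - #|Yset dl y1|.
Proof.
move=> sub; rewrite /h1 -(setIidPr sub) -cardsD -sum_card.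
apply: eq_bigr => j _; rewrite nth_bits !inE.
have := subsetP sub j; rewrite inE.
by case: (nth false y1 j); case: (j \in ws m) => //= h; have := h isT.
Qed.

Lemma card_supsets dl p (Y : {set 'I_dl}) : #|Y| <= p ->
  #|[set s : {set 'I_dl} | (#|s| == p) && (Y \subset s)]| = 'C(dl - #|Y|, p - #|Y|).
Proof.
move=> hY.
have -> : [set s : {set 'I_dl} | (#|s| == p) && (Y \subset s)] =
    (fun B : {set 'I_dl} => B :|: Y) @: [set B : {set 'I_dl} | B \subset ~: Y & #|B| == p - #|Y|].
  apply/setP => s; rewrite inE; apply/andP/imsetP.
    case=> /eqP hs sub; exists (s :\: Y).
      rewrite inE; apply/andP; split; first by apply/subsetP => x; rewrite !inE => /andP[].
      by rewrite cardsD (setIidPr sub) hs.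
    apply/setP => x; rewrite !inE; case: (boolP (x \in Y)) => hx /=; last by rewrite orbF.
    by rewrite (subsetP sub x hx) ?orbT.
  case=> B; rewrite inE => /andP[sB /eqP cB] ->; split; last exact: subsetUr.
  rewrite cardsU cB.
  have -> : B :&: Y = set0.
    apply/setP => x; rewrite !inE; apply/negP => /andP[xB xY].
    by have := subsetP sB x xB; rewrite inE xY.
  by rewrite cards0 subn0 subnK.
rewrite card_in_imset ?cards_draws.
  by congr 'C(_, _); have := cardsC Y; rewrite card_ord; lia.
move=> B1 B2; rewrite !inE => /andP[s1 _] /andP[s2 _] e.
have dis (B : {set 'I_dl}) : B \subset ~: Y -> (B :|: Y) :\: Y = B.
  move=> sB; apply/setP => x; rewrite !inE.
  case: (boolP (x \in B)) => xB /=; last by case: (x \in Y).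
  by have := subsetP sB x xB; rewrite inE => ->.
by rewrite -(dis _ s1) e dis.
Qed.

Definition Wl dl p : seq {set 'I_dl} := enum [set s : {set 'I_dl} | #|s| == p].

Lemma size_Wl dl p : size (Wl dl p) = 'C(dl, p).
Proof. by rewrite /Wl -cardE card_draws card_ord. Qed.

Definition ws dl p {N} (i : 'I_N) : {set 'I_dl} := nth set0 (Wl dl p) (i %% 'C(dl, p)).

Lemma ws_card dl p N (i : 'I_N) : p <= dl -> #|ws dl p i| = p.
Proof.
move=> hp; have C0 : 0 < 'C(dl, p) by rewrite bin_gt0.
have : ws dl p i \in Wl dl p by rewrite mem_nth // size_Wl ltn_mod.
by rewrite mem_enum inE => /eqP.
Qed.

Lemma count_S dl p N (Y : {set 'I_dl}) : p <= dl -> #|Y| <= p ->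
  #|[set i : 'I_N | Y \subset ws dl p i]| <= 'C(dl - #|Y|, p - #|Y|) * (N %/ 'C(dl, p)).+1.
Proof.
move=> hp hY; have C0 : 0 < 'C(dl, p) by rewrite bin_gt0.
pose g (i : 'I_N) := (ws dl p i, (inord (i %/ 'C(dl, p)) : 'I_(N %/ 'C(dl, p)).+1)).
have inj : injective g.
  move=> i j [e1 e2].
  have hd (k : 'I_N) : k %/ 'C(dl, p) < (N %/ 'C(dl, p)).+1.
    by rewrite ltnS leq_div2r // ltnW.
  move: e2 => /(congr1 val); rewrite /= !inordK // => e2.
  have : i %% 'C(dl, p) == j %% 'C(dl, p).
    rewrite -(nth_uniq set0 (s := Wl dl p)) ?size_Wl ?ltn_mod //; last exact: enum_uniq.
    by apply/eqP.
  move/eqP => e1'; apply: val_inj => /=.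
  by rewrite (divn_eq i 'C(dl, p)) (divn_eq j 'C(dl, p)) e2 e1'.
rewrite -(card_imset _ inj).
apply: leq_trans (subset_leq_card (_ : _ \subset
   setX [set s : {set 'I_dl} | (#|s| == p) && (Y \subset s)] [set: 'I_(N %/ 'C(dl, p)).+1])) _.
  apply/subsetP => x /imsetP [i]; rewrite inE => hi ->; by rewrite !inE ws_card // eqxx hi.
by rewrite cardsX card_supsets // cardsT card_ord.
Qed.

Lemma bin_sup a1 b1 a2 b2 :
  'C(a1 + b1, b1) * 'C(a2 + b2, b2) <= 'C(a1 + a2 + (b1 + b2), b1 + b2).
Proof.
have -> : a1 + a2 + (b1 + b2) = (a1 + b1) + (a2 + b2) by lia.
rewrite -(binomial.Vandermonde (a1 + b1) (a2 + b2) (b1 + b2)).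
have hb : b1 < (b1 + b2).+1 by rewrite ltnS leq_addr.
rewrite (bigD1 (Ordinal hb)) //= addKn; exact: leq_addr.
Qed.

Lemma bin_mono a b b' : b <= b' -> 'C(a + b, b) <= 'C(a + b', b').
Proof.
move=> h; rewrite -(subnKC h); elim: (b' - b) => [|d IH]; first by rewrite addn0.
apply: leq_trans IH _; rewrite !addnS binS; exact: leq_addl.
Qed.

Lemma bin_pow a b f : 'C(a + b, b) ^ f <= 'C(a * f + b * f, b * f).
Proof.
elim: f => [|f IH]; first by rewrite !muln0 bin0.
rewrite expnS !mulnS; apply: leq_trans (leq_mul (leqnn _) IH) _.
exact: bin_sup.
Qed.

Lemma bin_prod a (f g : nat -> nat) n :
  \prod_(i < n) 'C(a + g i, g i) ^ f i <=
  'C(a * \sum_(i < n) f i + \sum_(i < n) g i * f i, \sum_(i < n) g i * f i).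
Proof.
elim: n => [|n IH]; first by rewrite !big_ord0 muln0 bin0.
rewrite !big_ord_recr /= mulnDr.
apply: leq_trans (leq_mul IH (bin_pow a (g n) (f n))) _.
by rewrite [g n * f n]mulnC; exact: bin_sup.
Qed.



Local Open Scope ring_scope.

Lemma sum_single n (j : 'I_n) (a : nat) :
  (\sum_(i < n) (if i == j then a else 0%N))%N = a.
Proof. by rewrite -big_mkcond big_pred1_eq. Qed.

Lemma prod_single (R : realType) n (j : 'I_n) (x : 'I_n -> R) (a : nat) :
  \prod_(i < n) x i ^+ (if i == j then a else 0%N) = x j ^+ a.
Proof.
rewrite (eq_bigr (fun i => if i == j then x i ^+ a else 1)); last first.
  by move=> i _; case: (i == j).
by rewrite -big_mkcond big_pred1_eq.
Qed.

Lemma gamma_ge1 (R : realType) delta p (eps : R) :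
  (forall e : nat, (e < p)%N -> 1 < gamma delta p eps e) ->
  forall e, 1 <= gamma delta p eps e.
Proof.
move=> hg e; case: (ltnP e p) => h; first exact: ltW (hg e h).
by rewrite /gamma ltnNge h.
Qed.

Lemma gprod_ge1 (R : realType) delta p (eps : R) k kk :
  (forall e : nat, (e < p)%N -> 1 < gamma delta p eps e) ->
  1 <= gprod delta p eps k kk.
Proof.
move=> hg; rewrite /gprod; apply: (big_ind (fun x : R => 1 <= x)) => //.
  by move=> x y hx hy; apply: mulr_ege1.
by move=> i _; apply: exprn_ege1; apply: gamma_ge1.
Qed.

Lemma minS_ge1 (R : realType) delta p (eps : R) k t :
  (forall e : nat, (e < p)%N -> 1 < gamma delta p eps e) ->
  1 <= minS delta p eps k t.
Proof.
move=> hg; rewrite /minS; apply: le_bigmin.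
  by apply: exprn_ege1; apply: gamma_ge1.
by move=> kk _; apply: gprod_ge1.
Qed.

Lemma minS_le (R : realType) delta p (eps : R) k t kk :
  Sktp k t p kk -> minS delta p eps k t <= gprod delta p eps k kk.
Proof. by move=> h; rewrite /minS; apply: bigmin_le_cond. Qed.

Lemma minS_le1 (R : realType) delta p (eps : R) k t :
  (p * k <= t + p)%N -> minS delta p eps k t <= 1.
Proof.
move=> h.
pose kk : {ffun 'I_p.+1 -> 'I_k.+1} := [ffun i => if i == ord_max then ord_max else ord0].
have kkE i : (kk i : nat) = if i == ord_max then k else 0%N.
  by rewrite ffunE; case: (i == ord_max).
apply: le_trans (@minS_le R delta p eps k t kk _) _.
  rewrite /Sktp; apply/andP; split.
    by rewrite (eq_bigr _ (fun i _ => kkE i)) sum_single.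
  rewrite (eq_bigr (fun i => if i == ord_max then (p * k)%N else 0%N)) ?sum_single //.
  by move=> i _; rewrite kkE; case: eqP => [->|] //=; rewrite muln0.
rewrite /gprod (eq_bigr (fun i : 'I_p.+1 => gamma delta p eps i ^+ (if i == ord_max then k else 0%N))).
  by rewrite prod_single /gamma /= ltnn expr1n.
by move=> i _; rewrite kkE.
Qed.

Lemma minS_ext (R : realType) delta p (eps : R) k t (e : 'I_p.+1)
    (kk : {ffun 'I_p.+1 -> 'I_k.+1}) :
  (e <= t)%N -> (\sum_(i < p.+1) (kk i : nat))%N = k ->
  (\sum_(i < p.+1) (i * kk i) <= t - e + p)%N ->
  minS delta p eps k.+1 t <= gamma delta p eps e * gprod delta p eps k kk.
Proof.
move=> het hs hw.
pose kk' : {ffun 'I_p.+1 -> 'I_k.+2} := [ffun i => inord (kk i + (i == e))].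
have kkE i : (kk' i : nat) = (kk i + (i == e))%N.
  rewrite ffunE inordK // ltnS; have := ltn_ord (kk i); case: (i == e) => /=; lia.
have s1 : (\sum_(i < p.+1) ((i == e) : nat))%N = 1%N.
  by rewrite -(@sum_single p.+1 e 1%N); apply: eq_bigr => i _; case: (i == e).
have s2 : (\sum_(i < p.+1) (i * (i == e)))%N = e.
  rewrite -(@sum_single p.+1 e e); apply: eq_bigr => i _.
  by case: eqP => [->|]; rewrite ?muln1 ?muln0.
apply: le_trans (@minS_le R delta p eps k.+1 t kk' _) _.
  rewrite /Sktp; apply/andP; split.
    by rewrite (eq_bigr _ (fun i _ => kkE i)) big_split /= hs s1 addn1.
  rewrite (eq_bigr (fun i : 'I_p.+1 => (i * kk i + i * (i == e))%N)); last first.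
    by move=> i _; rewrite kkE mulnDr.
  rewrite big_split /= s2; apply: leq_trans (leq_add hw (leqnn e)) _; move: het; lia.
rewrite /gprod (eq_bigr (fun i : 'I_p.+1 =>
   gamma delta p eps i ^+ kk i * gamma delta p eps i ^+ (if i == e then 1%N else 0%N))).
  by rewrite big_split /= prod_single expr1 mulrC.
by move=> i _; rewrite kkE exprD; case: (i == e).
Qed.

Lemma minS_step (R : realType) delta p (eps : R) k t (e : nat) :
  (forall e : nat, (e < p)%N -> 1 < gamma delta p eps e) ->
  (e <= p)%N -> (e <= t)%N ->
  minS delta p eps k.+1 t <= gamma delta p eps e * minS delta p eps k (t - e).
Proof.
move=> hg hep het; have g0 : 0 < gamma delta p eps e.
  by apply: (lt_le_trans _ (@gamma_ge1 R delta p eps hg e)); rewrite ltr01.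
rewrite -ler_pdivrMl //; rewrite /minS; apply: le_bigmin.
  pose kk : {ffun 'I_p.+1 -> 'I_k.+1} := [ffun i => if i == ord0 then ord_max else ord0].
  have kkE i : (kk i : nat) = if i == ord0 then k else 0%N.
    by rewrite ffunE; case: (i == ord0).
  rewrite ler_pdivrMl // -/(minS delta p eps k.+1 t).
  have -> : gamma delta p eps 0 ^+ k = gprod delta p eps k kk.
    rewrite /gprod (eq_bigr (fun i : 'I_p.+1 => gamma delta p eps i ^+ (if i == ord0 then k else 0%N))).
      by rewrite prod_single.
    by move=> i _; rewrite kkE.
  have -> : e = Ordinal (hep : (e < p.+1)%N) by [].
  apply: minS_ext => //.
    by rewrite (eq_bigr _ (fun i _ => kkE i)) sum_single.
  rewrite (eq_bigr (fun i => 0%N)) ?big1 // => i _; rewrite kkE.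
  by case: eqP => [->|]; rewrite ?muln0.
move=> kk /andP[/eqP hs hw].
rewrite ler_pdivrMl // -/(minS delta p eps k.+1 t).
have -> : e = Ordinal (hep : (e < p.+1)%N) by [].
by apply: minS_ext => //=; move: hw; lia.
Qed.

Lemma real_bound (R : realType) (N' u Nd Ce C A eps m' : R) :
  0 < Ce -> 0 < C -> 0 <= u -> 0 <= A -> 0 < eps ->
  N' <= Ce * (u + 1) -> u * C <= Nd ->
  Nd * Ce <= A * (1 - eps) * C * m' -> Ce <= eps * A * m' -> N' <= A * m'.
Proof.
move=> Ce0 C0 u0 A0 e0 h1 h2 h3 h4.
have h5 : u * Ce * C <= A * (1 - eps) * m' * C.
  apply: le_trans (_ : Nd * Ce <= _); last by lra.
  by rewrite -mulrA [Ce * C]mulrC mulrA ler_pM2r.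
have h6 : u * Ce <= A * (1 - eps) * m' by rewrite -(ler_pM2r C0).
lra.
Qed.

Lemma le_A (R : realType) (N A : nat) (m : R) :
  m <= 1 -> N%:R <= A%:R * m -> (N <= A)%N.
Proof.
move=> hm hN; rewrite -(ler_nat R); apply: le_trans hN _.
by rewrite -[leRHS]mulr1 ler_wpM2l ?ler0n.
Qed.

Lemma main_ind (R : realType) delta p (eps : R) (A : nat) :
  (0 < p)%N -> (p < delta)%N -> 0 < eps ->
  (forall e : nat, (e < p)%N -> 1 < gamma delta p eps e) ->
  ('C(delta, p))%:R <= eps * A%:R ->
  forall k t N, (t <= delta * k)%N -> N%:R <= A%:R * minS delta p eps k t ->
  admits (A + delta * k) t N.
Proof.
move=> hp hpd he hg hA k; elim: k => [|k IH] t N ht hN.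
  apply: admits_count.
  have m1 : minS delta p eps 0 t <= 1 by apply: minS_le1; rewrite muln0.
  have := @le_A R N A _ m1 hN; move: ht; lia.
case: (leqP (p * k) t) => hpk.
  apply: admits_count.
  have m1 : minS delta p eps k.+1 t <= 1 by apply: minS_le1; rewrite mulnS; lia.
  have := @le_A R N A _ m1 hN; move: ht; lia.
have -> : (A + delta * k.+1 = delta + (A + delta * k))%N by rewrite mulnS; lia.
have hpd' : (p <= delta)%N := ltnW hpd.
have hpk' : (p * k <= delta * k)%N by apply: leq_mul.
pose w := fun i : 'I_N => bits (ws delta p i).
pose Ys y1 : {set 'I_delta} := Yset delta y1.
have H : forall y1 : seq bool, exists c : strategy 'I_N,
    (p - #|Ys y1| <= t)%N -> (#|Ys y1| <= p)%N ->
    succ_on (A + delta * k) (t - (p - #|Ys y1|)) c [pred i | Ys y1 \subset ws delta p i].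
  move=> y1.
  case: (boolP ((p - #|Ys y1| <= t)%N && (#|Ys y1| <= p)%N)) => [/andP[c1 c2]|nc]; last first.
    by exists (fun _ _ _ => false) => c1 c2; move: nc; rewrite c1 c2.
  set e := (p - #|Ys y1|)%N.
  set S := [set i : 'I_N | Ys y1 \subset ws delta p i].
  have bound : (#|S|)%:R <= A%:R * minS delta p eps k (t - e).
    have st := @minS_step R delta p eps k t e hg (leq_subr _ _) c1.
    have m1 := @minS_ge1 R delta p eps k (t - e) hg.
    have A0 : 0 <= A%:R :> R by rewrite ler0n.
    case: (ltnP e p) => hep; last first.
      have ge : gamma delta p eps e = 1 by rewrite /gamma ltnNge hep.
      have : (#|S| <= N)%N by rewrite -[X in (_ <= X)%N]card_ord max_card.
      rewrite -(ler_nat R) => hS; apply: le_trans hS _; apply: le_trans hN _.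
      by rewrite ler_wpM2l // -[leRHS]mul1r -ge.
    have cnt := @count_S delta p N (Ys y1) hpd' c2.
    rewrite (_ : (delta - #|Ys y1| = delta - p + e)%N) in cnt; last by rewrite /e; lia.
    set Ce := 'C(delta - p + e, e) in cnt.
    set C := 'C(delta, p) in cnt hA.
    have Ce0 : (0 < Ce)%N by rewrite bin_gt0 leq_addl.
    have C0 : (0 < C)%N by rewrite bin_gt0.
    have ge : gamma delta p eps e = (1 - eps) * C%:R / Ce%:R by rewrite /gamma hep.
    have Cle : Ce%:R <= C%:R :> R.
      have := hg e hep; rewrite ge ltr_pdivlMr ?ltr0n // mul1r => h.
      apply: ltW; apply: lt_le_trans h _; rewrite ler_piMl ?ler0n //; lra.
    apply: (@real_bound R _ (N %/ C)%:R N%:R Ce%:R C%:R A%:R eps) => //.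
    - by rewrite ltr0n.
    - by rewrite ltr0n.
    - by rewrite -[1]/(1%:R) -natrD -natrM ler_nat addn1.
    - by rewrite -natrM ler_nat leq_trunc_div.
    - have h2 : N%:R <= A%:R * ((1 - eps) * C%:R / Ce%:R * minS delta p eps k (t - e)).
        by apply: le_trans hN _; rewrite ler_wpM2l // -ge.
      have Cn : Ce%:R != 0 :> R by rewrite pnatr_eq0 -lt0n.
      rewrite -(ler_pM2r (_ : 0 < Ce%:R)) ?ltr0n // in h2.
      apply: le_trans h2 _; rewrite le_eqVlt; apply/orP; left; apply/eqP; field.
      exact: Cn.
    - apply: le_trans Cle _; apply: le_trans hA _.
      by rewrite ler_peMr // mulr_ge0 // ltW.
  have ht' : (t - e <= delta * k)%N by move: ht hpk hpk'; lia.
  have [c hc] := @admits_succ _ _ _ (IH (t - e)%N #|S| ht' bound) 'I_N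
     [pred i | Ys y1 \subset ws delta p i] (eq_leq (esym (cardsE _))).
  by exists c.
case: (choice H) => c2 Hc2.
apply: (@succ_admits N _ _ (comb delta w c2)); apply: comb_succ.
move=> y1 m1 m2 _ _ ne va vb ha hb y2 o1 o2.
rewrite /w v1_bits in va; rewrite /w v1_bits in vb.
have ea : h1 delta w m1 y1 = (p - #|Ys y1|)%N by rewrite /w h1_bits // ws_card.
have eb : h1 delta w m2 y1 = (p - #|Ys y1|)%N by rewrite /w h1_bits // ws_card.
rewrite ea in ha o1; rewrite eb in hb o2.
have c2p : (#|Ys y1| <= p)%N.
  by rewrite -(@ws_card delta p N m1 hpd'); exact: subset_leq_card va.
exact: (Hc2 y1 ha c2p m1 m2 va vb ne y2 o1 o2).
Qed.
Lemma second_bound (R : realType) delta p (eps : R) k t :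
  (0 < p)%N -> (p < delta)%N -> 0 < eps ->
  (forall e : nat, (e < p)%N -> 1 < gamma delta p eps e) ->
  (1 - eps) ^+ k * ('C(delta, p))%:R ^+ k
     / ('C(delta * k - p * k + t + p, t + p))%:R <= minS delta p eps k t.
Proof.
move=> hp hpd he hg.
set q := 1 - eps; set C := 'C(delta, p); set Cb := 'C(_, _).
have Cb0 : (0 < Cb)%N by rewrite bin_gt0 -addnA leq_addl.
have g0 : gamma delta p eps 0 = q * C%:R by rewrite /gamma hp addn0 bin0 divr1.
have X0 : 0 <= (q * C%:R) ^+ k.
  by apply: exprn_ge0; rewrite -g0; apply: ltW; apply: lt_trans (hg 0%N hp).
have x0 : 0 <= q * C%:R by rewrite -g0; apply: ltW; apply: lt_trans (hg 0%N hp).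
rewrite -exprMn; apply: le_bigmin.
  by rewrite g0 ler_pdivrMr ?ltr0n // ler_peMr // ler1n.
move=> kk /andP[/eqP hs hw].
set Ce := fun e : nat => 'C(delta - p + e, e).
have Ce0 e : (0 < Ce e)%N by rewrite bin_gt0 leq_addl.
pose P := (\prod_(e < p.+1) Ce e ^ kk e)%N.
have P0 : (0 < P)%N by rewrite prodn_gt0 // => e; rewrite expn_gt0 Ce0.
have step1 : \prod_(e < p.+1) (q * C%:R / (Ce e)%:R) ^+ kk e <= gprod delta p eps k kk.
  apply: ler_prod => e _; apply/andP; split.
    by apply: exprn_ge0; apply: divr_ge0.
  apply: lerXn2r; rewrite ?nnegrE ?divr_ge0 //.
    by apply: le_trans (@gamma_ge1 R delta p eps hg e).
  rewrite /gamma; case: ltnP => he'; first exact: le_refl.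
  have ep : (e : nat) = p by apply/eqP; rewrite eqn_leq he' -ltnS ltn_ord.
  rewrite /Ce ep subnK; last exact: ltnW.
  rewrite -/C mulfK; last by rewrite pnatr_eq0 -lt0n bin_gt0 ltnW.
  by rewrite /q lerBlDr lerDl ltW.
have step2 : \prod_(e < p.+1) (q * C%:R / (Ce e)%:R) ^+ kk e = (q * C%:R) ^+ k / P%:R.
  rewrite (eq_bigr (fun e : 'I_p.+1 => (q * C%:R) ^+ kk e / ((Ce e) ^ kk e)%:R)).
    by rewrite prodf_div prodrXr hs natr_prod.
  by move=> e _; rewrite expr_div_n natrX.
have step3 : (P <= Cb)%N.
  have := bin_prod (delta - p) (fun i => kk (inord i)) (fun i => i) p.+1.
  have e1 : (\prod_(i < p.+1) 'C(delta - p + i, i) ^ kk (inord i) = P)%N.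
    by apply: eq_bigr => i _; rewrite inord_val.
  have e2 : (\sum_(i < p.+1) kk (inord i) = k)%N.
    by rewrite -[RHS]hs; apply: eq_bigr => i _; rewrite inord_val.
  have e3 : (\sum_(i < p.+1) i * kk (inord i) = \sum_(i < p.+1) i * kk i)%N.
    by apply: eq_bigr => i _; rewrite inord_val.
  rewrite e1 e2 e3 => h; apply: leq_trans h _.
  by rewrite /Cb -mulnBl -addnA; apply: bin_mono.
apply: le_trans step1; rewrite step2.
rewrite ler_pdivrMr ?ltr0n //.
apply: le_trans (_ : (q * C%:R) ^+ k <= (q * C%:R) ^+ k / P%:R * P%:R) _.
  by rewrite divfK // pnatr_eq0 -lt0n.
by rewrite ler_wpM2l ?divr_ge0 // ler_nat.
Qed.

Theorem lemma2 (R : realType) (delta p : nat) (eps : R) :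
  (0 < p)%N -> (p < delta)%N -> 0 < eps ->
  (forall e : nat, (e < p)%N -> 1 < gamma delta p eps e) ->
  let A : nat := `| Num.ceil (('C(delta, p))%:R / eps) |%N in
  forall t k : nat, (t <= delta * k)%N ->
    Num.floor (A%:R * minS delta p eps k t) <= (Mzf (A + delta * k) t)%:Z
    /\ A%:R * ((1 - eps) ^+ k * ('C(delta, p))%:R ^+ k
               / ('C(delta * k - p * k + t + p, t + p))%:R) - 1
       <= (Mzf (A + delta * k) t)%:R.
Proof.
move=> hp hpd he hg A t k ht.
have cge : 0 <= Num.ceil (('C(delta, p))%:R / eps).
  have h0 : 0 <= ('C(delta, p))%:R / eps :> R by rewrite divr_ge0 ?ler0n ?ltW.
  by rewrite ceil_ge0; lra.
have AE : A%:R = (Num.ceil (('C(delta, p))%:R / eps))%:~R :> R.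
  by rewrite /A natr_absz ger0_norm.
have hA : ('C(delta, p))%:R <= eps * A%:R :> R.
  rewrite AE -ler_pdivrMl // mulrC; exact: ceil_ge.
have m1 := @minS_ge1 R delta p eps k t hg.
have Am0 : 0 <= A%:R * minS delta p eps k t.
  by rewrite mulr_ge0 ?ler0n // (le_trans _ m1).
have fge : 0 <= Num.floor (A%:R * minS delta p eps k t) by rewrite floor_ge0.
set N := `| Num.floor (A%:R * minS delta p eps k t) |%N.
have NE : N%:R = (Num.floor (A%:R * minS delta p eps k t))%:~R :> R.
  by rewrite /N natr_absz ger0_norm.
have hN : N%:R <= A%:R * minS delta p eps k t by rewrite NE floor_le.
have adm := @main_ind R delta p eps A hp hpd he hg hA k t N ht hN.
have NM := @Mzf_ge _ _ _ adm.
split.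
  by rewrite -(gez0_abs fge) -/N lez_nat.
have sb := @second_bound R delta p eps k t hp hpd he hg.
have : A%:R * minS delta p eps k t < N%:R + 1.
  by rewrite NE -[1]/(1%:~R) -intrD; have := floor_itv (A%:R * minS delta p eps k t) => /andP[].
have : (N%:R <= (Mzf (A + delta * k) t)%:R :> R) by rewrite ler_nat.
have : A%:R * ((1 - eps) ^+ k * ('C(delta, p))%:R ^+ k
               / ('C(delta * k - p * k + t + p, t + p))%:R) <= A%:R * minS delta p eps k t.
  by rewrite ler_wpM2l ?ler0n.
lra.
Qed.
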